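(* Let $\mathcal{M}\subseteq 2^N$ be a matroid on $N=[n]$. Let the elements have distinct nonnegative weights with $w(\{1\})>\dots>w(\{n\})$. Let $k$ satisfy the standing assumptions below, and let $p\in[\varepsilon(k),1/2]$. Let $X_1,\dots,X_n\sim\mathrm{Ber}(2p)$ and $Y_1,\dots,Y_n\sim\mathrm{Ber}(1/2)$ be mutually independent. Set $S=\{i:X_i=1,Y_i=1\}$ and $S^+=S\cap\mathrm{OPT}(N,\mathcal{M}^k)$. Then \[ \Pr\bigl[\varphi(S^+,\mathcal{M})\ge(1+\varepsilon(pk))pk\bigr]\le 1/n^3 . \]
   Context: Matroids are identified with their families of independent sets. $\mathcal{M}^k$ is the $k$-fold union of $\mathcal{M}$: the family of sets partitionable into $k$ members of $\mathcal{M}$. $\mathrm{OPT}(N,\mathcal{M}^k)$ is the maximum-weight set in $\mathcal{M}^k$, where the weight of a set is the sum of its elements' weights; it is unique since weights are distinct. The covering number $\varphi(S,\mathcal{M})$ is the least $r\in\mathbb{N}$ such that $S$ can be partitioned into $r$ members of $\mathcal{M}$. Standing assumptions: $\varepsilon(x)=C\sqrt{\log(n)/x}$, where $C$ is a sufficiently large absolute constant (e.g. $C\in[10,20]$, such that $\log(1/\varepsilon(k))-2$ is a positive integer), and $160^2\log n\le k\le n$. *)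

(* Defs.v *)
From HB Require Import structures.
From mathcomp Require Import all_boot all_order all_algebra.
From mathcomp Require Import boolp reals exp.
Set Implicit Arguments. Unset Strict Implicit. Unset Printing Implicit Defensive.
Import Order.TTheory GRing.Theory Num.Theory.
Local Open Scope ring_scope.

(* A matroid on N = 'I_n, identified with its family of independent sets. *)
Definition is_matroid (n : nat) (M : {set {set 'I_n}}) : Prop :=
  [/\ set0 \in M,
      (forall A B : {set 'I_n}, B \in M -> A \subset B -> A \in M) &
      (forall A B : {set 'I_n}, A \in M -> B \in M -> #|A| < #|B| ->
         exists2 x, x \in B :\: A & x |: A \in M)]%N.

Definition partitionable (n : nat) (M : {set {set 'I_n}}) (S : {set 'I_n})
  (r : nat) : Prop :=
  exists P : 'I_r -> {set 'I_n},
    [/\ forall i j, i != j -> [disjoint P i & P j],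
        \bigcup_(i < r) P i = S &
        forall i, P i \in M].

Definition kfold_union (n : nat) (M : {set {set 'I_n}}) (k : nat)
  (S : {set 'I_n}) : Prop := partitionable M S k.

Definition setw (R : realType) (n : nat) (w : 'I_n -> R) (S : {set 'I_n}) : R :=
  \sum_(i in S) w i.

Definition is_OPT (R : realType) (n : nat) (M : {set {set 'I_n}}) (k : nat)
  (w : 'I_n -> R) (T : {set 'I_n}) : Prop :=
  kfold_union M k T /\
  forall T', kfold_union M k T' -> setw w T' <= setw w T.

(* If no such r exists (phi = infinity) we return n.+1, which
   exceeds every finite covering number (a finite one is at most #|S| <= n). *)
Definition phi (n : nat) (M : {set {set 'I_n}}) (S : {set 'I_n}) : nat :=
  match pselect (exists r, partitionable M S r) with
  | left h =>
      @ex_minn (fun r => `[< partitionable M S r >])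
        (let: ex_intro r hr := h in ex_intro _ r (asboolT hr))
  | right _ => n.+1
  end.

Definition eps (R : realType) (C : R) (n : nat) (x : R) : R :=
  C * Num.sqrt (ln (n%:R) / x).

(* Outcomes: omega i = (X_i, Y_i), with X_i ~ Ber(2p), Y_i ~ Ber(1/2), all
   mutually independent: product probability mass. *)
Definition outcome_prob (R : realType) (n : nat) (p : R)
  (om : {ffun 'I_n -> bool * bool}) : R :=
  \prod_(i < n) ((if (om i).1 then 2 * p else 1 - 2 * p) * (1 / 2)).

Definition Pr (R : realType) (n : nat) (p : R)
  (E : {ffun 'I_n -> bool * bool} -> bool) : R :=
  \sum_(om | E om) outcome_prob p om.

Definition sampleS (n : nat) (om : {ffun 'I_n -> bool * bool}) : {set 'I_n} :=
  [set i | (om i).1 && (om i).2].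

(* Main.v *)
Require Import Defs.
From HB Require Import structures.
From mathcomp Require Import all_boot all_order all_algebra.
From mathcomp Require Import boolp reals exp sequences.
From mathcomp Require Import zify ring lra.
Import Order.TTheory GRing.Theory Num.Theory.
Set Implicit Arguments. Unset Strict Implicit. Unset Printing Implicit Defensive.


Definition rk (n : nat) (M : {set {set 'I_n}}) (A : {set 'I_n}) : nat :=
  \big[maxn/0%N]_(B in M | B \subset A) #|B|.

Lemma rk_ge n (M : {set {set 'I_n}}) (A B : {set 'I_n}) :
  B \in M -> B \subset A -> (#|B| <= rk M A)%N.
Proof. by move=> HB HBA; rewrite /rk (leq_bigmax_cond B) // HB. Qed.

Lemma rk_basis n (M : {set {set 'I_n}}) (A : {set 'I_n}) : is_matroid M ->
  exists B, [/\ B \in M, B \subset A & #|B| = rk M A].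
Proof.
case=> H0 _ _.
have [B HB ->] : {B | B \in [pred B | (B \in M) && (B \subset A)] & rk M A = #|B|}.
  by apply: (eq_bigmax_cond (fun B : {set 'I_n} => #|B|)); apply/card_gt0P; exists set0; rewrite inE H0 sub0set.
by case/andP: HB => ? ?; exists B.
Qed.

Lemma rk_le_card n (M : {set {set 'I_n}}) (A : {set 'I_n}) : is_matroid M -> (rk M A <= #|A|)%N.
Proof. by move=> HM; have [B [_ HBA <-]] := rk_basis A HM; apply: subset_leq_card. Qed.

Lemma rk_full n (M : {set {set 'I_n}}) (A : {set 'I_n}) : is_matroid M -> (#|A| <= rk M A)%N -> A \in M.
Proof.
move=> HM H; have [B [HB HBA HBc]] := rk_basis A HM.
suff -> : A = B by [].
apply/esym/eqP; rewrite eqEcard HBA /=; by rewrite HBc.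
Qed.

Lemma rk_mono n (M : {set {set 'I_n}}) (A A' : {set 'I_n}) : is_matroid M -> A \subset A' ->
  (rk M A <= rk M A')%N.
Proof.
move=> HM HAA; have [B [HB HBA <-]] := rk_basis A HM.
by apply: rk_ge => //; apply: subset_trans HAA.
Qed.

Lemma rk0 n (M : {set {set 'I_n}}) : is_matroid M -> rk M set0 = 0%N.
Proof. by move=> HM; apply/eqP; rewrite -leqn0 -(cards0 'I_n) rk_le_card. Qed.

Lemma rk_extend n (M : {set {set 'I_n}}) (X I : {set 'I_n}) : is_matroid M ->
  I \in M -> I \subset X ->
  exists K, [/\ K \in M, I \subset K, K \subset X & #|K| = rk M X].
Proof.
move=> HM; have [B [HB HBX HBc]] := rk_basis X HM.
case: (HM) => _ _ Hex.
move Hd: (rk M X - #|I|)%N => d.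
elim: d I Hd => [|d IH] I Hd HI HIX.
  exists I; split=> //; apply/eqP; rewrite eqn_leq rk_ge //=.
  by move/eqP: Hd; rewrite subn_eq0.
have lt : (#|I| < #|B|)%N by rewrite HBc; lia.
have [x /setDP [xB xI] HxI] := Hex I B HI HB lt.
have Hxc : #|x |: I| = #|I|.+1 by rewrite cardsU1 xI.
have [K [HK HxK HKX HKc]] := IH (x |: I) ltac:(lia) HxI
   ltac:(by rewrite subUset sub1set (subsetP HBX) // HIX).
exists K; split=> //; apply: subset_trans HxK; exact: subsetUr.
Qed.

Lemma rk_submod n (M : {set {set 'I_n}}) (A B : {set 'I_n}) : is_matroid M ->
  (rk M (A :|: B) + rk M (A :&: B) <= rk M A + rk M B)%N.
Proof.
move=> HM; have [I [HI HIs HIc]] := rk_basis (A :&: B) HM.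
have [K [HK HIK HKs HKc]] := rk_extend HM HI (subset_trans (subset_trans HIs (subsetIl A B)) (subsetUl A B)).
case: (HM) => _ Hher _.
have hA : (#|K :&: A| <= rk M A)%N by apply: rk_ge; [apply: Hher HK _; exact: subsetIl| exact: subsetIr].
have hB : (#|K :&: B| <= rk M B)%N by apply: rk_ge; [apply: Hher HK _; exact: subsetIl| exact: subsetIr].
have hU : K :&: A :|: K :&: B = K.
  by rewrite -setIUr; apply/setIidPl.
have hI : I \subset (K :&: A) :&: (K :&: B).
  by rewrite setIACA setIid subsetI HIK HIs.
have := cardsUI (K :&: A) (K :&: B); rewrite hU => hc.
have := subset_leq_card hI; lia.
Qed.

Definition slice n q (X : {set 'I_n * 'I_q}) (j : 'I_q) : {set 'I_n} :=
  [set s | (s, j) \in X].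
Definition rho n q (M : {set {set 'I_n}}) (X : {set 'I_n * 'I_q}) : nat :=
  \sum_(j < q) rk M (slice X j).
Definition PF n q (F : 'I_n -> {set 'I_q}) (J : {set 'I_n}) : {set 'I_n * 'I_q} :=
  [set x | (x.1 \in J) && (x.2 \in F x.1)].
Definition Hallb n q (M : {set {set 'I_n}}) (S : {set 'I_n}) (F : 'I_n -> {set 'I_q}) :=
  [forall J : {set 'I_n}, (J \subset S) ==> (#|J| <= rho M (PF F J))%N].

Lemma rho_mono n q (M : {set {set 'I_n}}) (X Y : {set 'I_n * 'I_q}) :
  is_matroid M -> X \subset Y -> (rho M X <= rho M Y)%N.
Proof.
move=> HM HXY; apply: leq_sum => j _; apply: rk_mono => //.
by apply/subsetP => s; rewrite !inE => /(subsetP HXY).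
Qed.

Lemma rho_submod n q (M : {set {set 'I_n}}) (X Y : {set 'I_n * 'I_q}) :
  is_matroid M -> (rho M (X :|: Y) + rho M (X :&: Y) <= rho M X + rho M Y)%N.
Proof.
move=> HM; rewrite /rho -!big_split /=; apply: leq_sum => j _.
have -> : slice (X :|: Y) j = slice X j :|: slice Y j by apply/setP => s; rewrite !inE.
have -> : slice (X :&: Y) j = slice X j :&: slice Y j by apply/setP => s; rewrite !inE.
exact: rk_submod.
Qed.

Lemma rho0 n q (M : {set {set 'I_n}}) : is_matroid M -> rho M (set0 : {set 'I_n * 'I_q}) = 0%N.
Proof.
move=> HM; rewrite /rho big1 // => j _.
have -> : slice (set0 : {set 'I_n * 'I_q}) j = set0 by apply/setP => s; rewrite !inE.
exact: rk0.
Qed.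

Definition Fdel n q (F : 'I_n -> {set 'I_q}) (s0 : 'I_n) (j : 'I_q) : 'I_n -> {set 'I_q} :=
  fun s => if s == s0 then F s0 :\ j else F s.

Lemma Fdel_sub n q (F : 'I_n -> {set 'I_q}) s0 j s : Fdel F s0 j s \subset F s.
Proof. by rewrite /Fdel; case: eqP => [->|_]; [exact: subsetDl|]. Qed.

Lemma Fdel_sum n q (F : 'I_n -> {set 'I_q}) (S : {set 'I_n}) s0 j :
  s0 \in S -> j \in F s0 ->
  (\sum_(s in S) #|Fdel F s0 j s|).+1 = \sum_(s in S) #|F s|.
Proof.
move=> Hs0 Hj; rewrite (bigD1 s0) //= [in RHS](bigD1 s0) //=.
rewrite /Fdel eqxx (cardsD1 j (F s0)) Hj.
rewrite (eq_bigr (fun s => #|F s|)); last by move=> s /andP [_ /negPf ->].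
by rewrite add1n.
Qed.

Lemma Hall_del n q (M : {set {set 'I_n}}) (S : {set 'I_n}) (F : 'I_n -> {set 'I_q}) s0 j1 j2 :
  is_matroid M -> Hallb M S F -> s0 \in S -> j1 != j2 ->
  Hallb M S (Fdel F s0 j1) || Hallb M S (Fdel F s0 j2).
Proof.
move=> HM HF Hs0 Hj12; apply/negP => /negP; rewrite negb_or => /andP [/forallPn [J1 +] /forallPn [J2 +]].
rewrite !negb_imply -!ltnNge => /andP [HJ1 H1] /andP [HJ2 H2].
have HFJ (J : {set 'I_n}) : J \subset S -> (#|J| <= rho M (PF F J))%N.
  by move=> HJ; move/forallP: HF => /(_ J); rewrite HJ.
have inJ (J : {set 'I_n}) j : J \subset S -> (rho M (PF (Fdel F s0 j) J) < #|J|)%N -> s0 \in J.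
  move=> HJ Hlt; apply/negPn/negP => Hn.
  suff E : PF (Fdel F s0 j) J = PF F J by have := HFJ J HJ; rewrite -E; lia.
  apply/setP => [[s i]]; rewrite !inE /= /Fdel; case: eqP => [->|//].
  by rewrite (negPf Hn).
have s0J1 := inJ _ _ HJ1 H1; have s0J2 := inJ _ _ HJ2 H2.
set X1 := PF (Fdel F s0 j1) J1; set X2 := PF (Fdel F s0 j2) J2.
have HU : PF F (J1 :|: J2) \subset X1 :|: X2.
  apply/subsetP => [[s i]]; rewrite !inE /= /Fdel => /andP [HsJ Hi].
  case: eqP => [Es|Ns].
    subst s; rewrite s0J1 s0J2 /=; case: (eqVneq i j1) => [Ei|Ni].
      by subst i; rewrite !inE Hj12 Hi orbT.
    by rewrite !inE Ni Hi.
  by rewrite Hi !andbT.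
have HI : PF F ((J1 :&: J2) :\ s0) \subset X1 :&: X2.
  apply/subsetP => [[s i]]; rewrite !inE /= /Fdel => /andP [/andP [Ns /andP [HsJ1 HsJ2]] Hi].
  by rewrite (negPf Ns) HsJ1 HsJ2 Hi.
have hU := leq_trans (HFJ (J1 :|: J2) ltac:(by rewrite subUset HJ1 HJ2)) (rho_mono HM HU).
have hI := leq_trans (HFJ ((J1 :&: J2) :\ s0) ltac:(by apply: subset_trans (subsetDl _ _) (subset_trans (subsetIl _ _) HJ1))) (rho_mono HM HI).
have hS := rho_submod X1 X2 HM.
have hc := cardsUI J1 J2.
have hd := cardsD1 s0 (J1 :&: J2); rewrite inE s0J1 s0J2 /= in hd.
have h4 := leq_trans (leq_add hU hI) hS.
have h5 : (#|J1 :|: J2| + #|J1 :&: J2 :\ s0|).+1 = (#|J1| + #|J2|)%N. by rewrite -hc hd add1n addnS.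
have h6 := leq_add H1 H2.
move: h4 h5 h6; rewrite /X1 /X2.
lia.
Qed.

Lemma rado_base n q (M : {set {set 'I_n}}) (S : {set 'I_n}) (F : 'I_n -> {set 'I_q}) :
  is_matroid M -> Hallb M S F -> (forall s, s \in S -> #|F s| <= 1)%N ->
  exists c : 'I_n -> option 'I_q,
    (forall s, s \in S -> exists2 j, c s = Some j & j \in F s) /\
    forall j, [set s in S | c s == Some j] \in M.
Proof.
move=> HM HF H1.
have HFJ (J : {set 'I_n}) : J \subset S -> (#|J| <= rho M (PF F J))%N.
  by move=> HJ; move/forallP: HF => /(_ J); rewrite HJ.
pose c s := [pick j in F s].
have cP s : s \in S -> exists2 j, c s = Some j & j \in F s.
  move=> Hs; rewrite /c; case: pickP => [j Hj|H0]; first by exists j.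
  have E : PF F [set s] = set0.
    by apply/setP => [[s' i]]; rewrite !inE /=; apply/negP => /andP [/eqP -> Hi]; have := H0 i; rewrite Hi.
  by have := HFJ [set s]; rewrite sub1set Hs E rho0 // cards1 => /(_ isT).
exists c; split => // j; apply: rk_full => //.
set J := [set s in S | c s == Some j].
have HJ : J \subset S by apply/subsetP => s; rewrite inE => /andP [].
apply: leq_trans (HFJ J HJ) _.
rewrite /rho (bigD1 j) //= big1 ?addn0.
  apply: rk_mono => //; apply/subsetP => s; rewrite !inE => /andP [] //.
move=> j' Hj'.
suff -> : slice (PF F J) j' = set0 by exact: rk0.
apply/setP => s; rewrite !inE /=; apply/negP => /andP [/andP [Hs /eqP Hc] Hj'F].
have [j0 Hc0 Hj0] := cP s Hs.
rewrite Hc in Hc0; case: Hc0 => Ej; subst j0.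
have := card_le1_eqP (H1 s Hs) j j' Hj0 Hj'F => Ejj.
by rewrite Ejj eqxx in Hj'.
Qed.

Lemma rado n q (M : {set {set 'I_n}}) (S : {set 'I_n}) : is_matroid M ->
  forall F : 'I_n -> {set 'I_q}, Hallb M S F ->
  exists c : 'I_n -> option 'I_q,
    (forall s, s \in S -> exists2 j, c s = Some j & j \in F s) /\
    forall j, [set s in S | c s == Some j] \in M.
Proof.
move=> HM F; move Hm: (\sum_(s in S) #|F s|)%N => m.
elim: m F Hm => [|m IH] F Hm HF.
all: case: (boolP [exists s in S, 1 < #|F s|]%N) => [/existsP [s0 /andP [Hs0 /card_gt1P [j1 [j2 [Hj1 Hj2 Hj12]]]]] | Hno].
- have := Fdel_sum Hs0 Hj1; lia.
- apply: rado_base => //. move=> s Hs; move/existsPn: Hno => /(_ s). by rewrite Hs /= -leqNgt.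
- have [H|H] := orP (Hall_del HM HF Hs0 Hj12).
  + have [c [c1 c2]] := IH _ (eq_add_S _ _ (etrans (Fdel_sum Hs0 Hj1) Hm)) H.
    exists c; split => // s Hs; have [j Hc Hj] := c1 s Hs; exists j => //.
    exact: (subsetP (Fdel_sub F s0 j1 s)).
  + have [c [c1 c2]] := IH _ (eq_add_S _ _ (etrans (Fdel_sum Hs0 Hj2) Hm)) H.
    exists c; split => // s Hs; have [j Hc Hj] := c1 s Hs; exists j => //.
    exact: (subsetP (Fdel_sub F s0 j2 s)).
- apply: rado_base => //. move=> s Hs; move/existsPn: Hno => /(_ s). by rewrite Hs /= -leqNgt.
Qed.

Lemma mcover n q (M : {set {set 'I_n}}) (S : {set 'I_n}) : is_matroid M ->
  (forall A : {set 'I_n}, A \subset S -> #|A| <= q * rk M A)%N -> partitionable M S q.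
Proof.
move=> HM HA.
have HF : Hallb M S (fun _ => [set: 'I_q]).
  apply/forallP => J; apply/implyP => HJ.
  rewrite /rho (eq_bigr (fun _ => rk M J)).
    by rewrite sum_nat_const card_ord; apply: HA.
  by move=> j _; congr rk; apply/setP => s; rewrite !inE andbT.
have [c [c1 c2]] := rado HM HF.
exists (fun j => [set s in S | c s == Some j]); split => //.
- move=> i j Hij; rewrite -setI_eq0; apply/eqP/setP => s; rewrite !inE; apply/negP => /andP [/andP [_ /eqP ->] /andP [_ /eqP [E]]].
  by rewrite E eqxx in Hij.
- apply/setP => s; apply/bigcupP/idP => [[j _]|Hs]; first by rewrite inE => /andP [].
  have [j Hc _] := c1 s Hs; exists j => //; by rewrite inE Hs Hc eqxx.
Qed.

Lemma card_bigcup_le n k (P : 'I_k -> {set 'I_n}) :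
  (#|\bigcup_(i < k) P i| <= \sum_(i < k) #|P i|)%N.
Proof.
apply: (big_ind2 (fun (X : {set 'I_n}) (m : nat) => #|X| <= m)%N).
- by rewrite cards0.
- move=> X1 m1 X2 m2 h1 h2; apply: leq_trans (leq_card_setU _ _) _; exact: leq_add.
- by [].
Qed.

Lemma not_part_witness n (M : {set {set 'I_n}}) (S : {set 'I_n}) q :
  is_matroid M -> ~ partitionable M S q ->
  exists A : {set 'I_n}, A \subset S /\ (q * rk M A < #|A|)%N.
Proof.
move=> HM Hn.
case: (boolP [exists A : {set 'I_n}, (A \subset S) && (q * rk M A < #|A|)%N]).
  by case/existsP => A /andP [? ?]; exists A.
move/existsPn => H; exfalso; apply: Hn; apply: mcover => // A HA.
by have := H A; rewrite HA /= -leqNgt.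
Qed.

Definition clT n (M : {set {set 'I_n}}) (T B : {set 'I_n}) : {set 'I_n} :=
  [set x in T | (x \in B) || (x |: B \notin M)].

Lemma clT_props n (M : {set {set 'I_n}}) (T A B : {set 'I_n}) k :
  is_matroid M -> kfold_union M k T -> A \subset T ->
  B \in M -> B \subset A -> #|B| = rk M A ->
  [/\ A \subset clT M T B, (#|clT M T B| <= k * #|B|)%N &
      (0 < #|A| -> 0 < #|B|)%N].
Proof.
move=> HM [P [Pdis PU PM]] HAT HB HBA HBc.
case: (HM) => _ Hher Hex.
split.
- apply/subsetP => x Hx; rewrite inE (subsetP HAT) //=.
  case: (boolP (x \in B)) => //= HxB; apply/negP => HxM.
  have Hsub : x |: B \subset A by rewrite subUset sub1set Hx HBA.
  by have := rk_ge HxM Hsub; rewrite cardsU1 HxB -HBc add1n ltnn.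
- have E : clT M T B = \bigcup_(i < k) (P i :&: clT M T B).
    by rewrite -big_distrl /= PU; apply/esym/setIidPr; apply/subsetP => x; rewrite inE => /andP [].
  rewrite E; apply: leq_trans (card_bigcup_le _) _.
  rewrite -[k in (_ <= k * _)%N]card_ord -sum_nat_const; apply: leq_sum => i _.
  rewrite leqNgt; apply/negP => Hlt.
  have HY : P i :&: clT M T B \in M by apply: Hher (PM i) _; exact: subsetIl.
  have [x /setDP [Hx HxB] HxBM] := Hex B _ HB HY Hlt.
  move: Hx; rewrite !inE => /andP [_ /andP [_]]; by rewrite (negPf HxB) HxBM.
- case/card_gt0P => a Ha.
  have HaT : a \in T by exact: (subsetP HAT).
  move: HaT; rewrite -PU => /bigcupP [i _ Hai].
  have Ha1 : [set a] \in M by apply: Hher (PM i) _; rewrite sub1set.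
  have Hsub : [set a] \subset A by rewrite sub1set.
  by have := rk_ge Ha1 Hsub; rewrite cards1 -HBc.
Qed.

Local Open Scope ring_scope.

Lemma phi_witness (R : realType) n (M : {set {set 'I_n}}) (S : {set 'I_n}) (t : R) :
  0 < t -> t <= (phi M S)%:R ->
  exists q : nat, t - 1 <= q%:R /\ ~ partitionable M S q.
Proof.
move=> t0; rewrite /phi; case: pselect => [h|h].
  case: ex_minnP => r Hr Hmin Ht.
  case: r Hr Hmin Ht => [|q] Hr Hmin Ht.
    by have := lt_le_trans t0 Ht; rewrite ltxx.
  exists q; split.
    by rewrite lerBlDr natr1.
  move=> Hq; have := Hmin q (asboolT Hq); rewrite ltnn.
  by [].
move=> Ht; exists n; split.
  by rewrite lerBlDr natr1.
by move=> Hq; apply: h; exists n.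
Qed.

Lemma op_ge0 (R : realType) n (p : R) (om : {ffun 'I_n -> bool * bool}) :
  0 <= p -> p <= 1 / 2 -> 0 <= outcome_prob p om.
Proof.
move=> p0 p1; apply: prodr_ge0 => i _; apply: mulr_ge0; last by lra.
by case: ifP => _; lra.
Qed.

Lemma union_bound (R : realType) n (p : R) (E : {ffun 'I_n -> bool * bool} -> bool)
  (I : finType) (good : pred I) (G : I -> {ffun 'I_n -> bool * bool} -> bool) :
  0 <= p -> p <= 1 / 2 ->
  (forall om, E om -> exists2 i, good i & G i om) ->
  Pr p E <= \sum_(i | good i) Pr p (G i).
Proof.
move=> p0 p1 HE.
rewrite /Pr.
apply: (@le_trans _ _ (\sum_(om | E om) \sum_(i | good i && G i om) outcome_prob p om)).
  apply: ler_sum => om Hom; have [i gi Gi] := HE om Hom.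
  rewrite (bigD1 i) /=; last by rewrite gi Gi.
  rewrite lerDl; apply: sumr_ge0 => j _; exact: op_ge0.
apply: (@le_trans _ _ (\sum_om \sum_(i | good i && G i om) outcome_prob p om)).
  rewrite [X in _ <= X](bigID E) /= lerDl; apply: sumr_ge0 => om _.
  by apply: sumr_ge0 => j _; exact: op_ge0.
under eq_bigr do rewrite big_mkcondr /=.
rewrite exchange_big /=; apply: ler_sum => i _.
by rewrite -big_mkcond.
Qed.

Lemma expR_ge1 (R : realType) (y : R) : 0 <= y -> 1 <= expR y.
Proof. move=> y0; apply: le_trans (expR_ge1Dx y); lra. Qed.

Lemma chernoff (R : realType) n (p x a : R) (F : {set 'I_n}) :
  0 <= p -> p <= 1 / 2 -> 0 <= x ->
  Pr p (fun om => a <= #|sampleS om :&: F|%:R) <=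
  expR (#|F|%:R * (p * (expR x - 1)) - x * a).
Proof.
move=> p0 p1 x0; rewrite /Pr.
pose cnt (om : {ffun 'I_n -> bool * bool}) := #|sampleS om :&: F|.
apply: (@le_trans _ _ (\sum_om outcome_prob p om * expR (x * ((cnt om)%:R - a)))).
  rewrite [X in _ <= X](bigID (fun om => a <= (cnt om)%:R)) /=.
  apply: ler_wpDr; first by apply: sumr_ge0 => om _; apply: mulr_ge0; [exact: op_ge0|exact: expR_ge0].
  apply: ler_sum => om Hom; apply: ler_peMr; first exact: op_ge0.
  by apply: expR_ge1; apply: mulr_ge0 => //; rewrite subr_ge0.
have Ecnt om : expR (x * ((cnt om)%:R - a)) =
   expR (- (x * a)) * \prod_(i < n) expR (x * ((i \in F) && (om i).1 && (om i).2)%:R).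
  rewrite -expR_sum -expRD; congr expR.
  rewrite /cnt -sum1_card natr_sum big_mkcond /= mulrBr addrC -mulr_sumr; congr (_ + _ * _).
  apply: eq_bigr => i _; rewrite !inE; case: (i \in F); case: (om i).1; case: (om i).2; by rewrite /= ?mulr0 ?mulr1.
under eq_bigr do rewrite Ecnt mulrCA.
rewrite -mulr_sumr expRD mulrC ler_pM2r ?expR_gt0 //.
rewrite /outcome_prob.
under eq_bigr do rewrite -big_split /=.
rewrite -(bigA_distr_bigA (fun i (z : bool * bool) =>
   ((if z.1 then 2 * p else 1 - 2 * p) * (1 / 2)) * expR (x * ((i \in F) && z.1 && z.2)%:R))) /=.
rewrite (mulr_natl (p * (expR x - 1)) #|F|) -sumr_const expR_sum [X in _ <= X]big_mkcond /=.
apply: ler_prod => i _; apply/andP; split.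
  apply: sumr_ge0 => z _; apply: mulr_ge0; last exact: expR_ge0.
  by apply: mulr_ge0; [case: ifP => _; lra| lra].
rewrite -(pair_bigA _ (fun (a b : bool) => (if a then 2 * p else 1 - 2 * p) * (1 / 2) * expR (x * ((i \in F) && a && b)%:R))) /= !big_bool /=.
case: (i \in F) => /=; rewrite ?mulr0 ?mulr1 ?expR0.
  apply: le_trans (expR_ge1Dx _); lra.
rewrite ?mulr1; lra.
Qed.

Lemma expR_le_inv (R : realType) (x : R) : x < 1 -> expR x * (1 - x) <= 1.
Proof.
move=> x1; have h1 := expR_ge1Dx (- x); have h2 := expRxMexpNx_1 x.
rewrite -h2; apply: ler_wpM2l; [exact: expR_ge0| lra].
Qed.

Lemma ln_ge19 (R : realType) (n : nat) : (2 <= n)%N -> 1 / 9 <= ln (n%:R : R).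
Proof.
move=> n2.
have hn : (2 : R) <= n%:R by rewrite (ler_nat R 2 n).
have l2 : ln (2 : R) <= ln (n%:R : R).
  rewrite ler_ln //; rewrite posrE; lra.
apply: le_trans l2; rewrite -ler_expR lnK ?posrE; last lra.
have h19 : (1 / 9 : R) < 1 by lra.
have := expR_le_inv h19; lra.
Qed.

Lemma key_ineq (R : realType) (C L mu e b K k p E : R) :
  mu * e ^+ 2 = C ^+ 2 * L -> 49 <= C ^+ 2 -> 1 / 9 <= L ->
  0 <= e -> e <= 1 / 2 -> 0 <= p -> 0 <= k -> mu = p * k -> K <= k * b -> 1 <= b ->
  1 <= E -> E * (1 - e / 4) <= 1 ->
  K * (p * (E - 1)) - e / 4 * (((1 + e) * mu - 1) * b) <= - (b * 5 * L).
Proof.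
move=> Hmu HC HL e0 e1 p0 k00 Hk HK Hb E1 HE.
have Ex : E - 1 <= e / 4 + 2 * (e / 4) ^+ 2.
  have h : (1 + e / 4 + 2 * (e / 4) ^+ 2) * (1 - e / 4) >= 1.
    have : 0 <= (e / 4) ^+ 2 * (1 - 2 * (e / 4)) by apply: mulr_ge0; [exact: sqr_ge0| lra].
    move=> h; nra.
  nra.
have k0 : 0 <= k * b by apply: mulr_ge0 => //; lra.
have s1 : K * (p * (E - 1)) <= k * b * (p * (e / 4 + 2 * (e / 4) ^+ 2)).
  apply: le_trans (_ : K * (p * (E - 1)) <= k * b * (p * (E - 1))) _.
    apply: ler_wpM2r => //; apply: mulr_ge0 => //; lra.
  apply: ler_wpM2l => //; apply: ler_wpM2l => //.
have s2 : k * b * (p * (e / 4 + 2 * (e / 4) ^+ 2)) = b * (mu * (e / 4 + 2 * (e / 4) ^+ 2)).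
  by rewrite Hk; ring.
rewrite s2 in s1.
suff : b * (mu * (e / 4 + 2 * (e / 4) ^+ 2)) - e / 4 * (((1 + e) * mu - 1) * b) <= - (b * 5 * L) by lra.
have -> : b * (mu * (e / 4 + 2 * (e / 4) ^+ 2)) - e / 4 * (((1 + e) * mu - 1) * b) =
          b * (- (mu * e ^+ 2) / 8 + e / 4) by field.
rewrite Hmu.
have : - (C ^+ 2 * L) / 8 + e / 4 <= - (5 * L) by nra.
move=> h; nra.
Qed.

Lemma sum_sets (R : realType) n (z : R) :
  \sum_(B : {set 'I_n}) z ^+ #|B| = (z + 1) ^+ n.
Proof.
have := @bigA_distr R 0 1 *%R +%R 'I_n (fun=> z) (fun=> 1).
rewrite prodr_const card_ord => ->.
by apply: eq_bigr => B _; rewrite -big_mkcond /= prodr_const.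
Qed.

Lemma final_bound (R : realType) n : (2 <= n)%N ->
  \sum_(B : {set 'I_n} | B != set0) (((n%:R : R) ^+ 5)^-1) ^+ #|B| <= 1 / (n%:R : R) ^+ 3.
Proof.
move=> n2; set N : R := n%:R; set z := (N ^+ 5)^-1.
have N2 : 2 <= N by rewrite /N (ler_nat R 2 n).
have := sum_sets n z; rewrite (bigD1 set0) //= cards0 expr0 => Hs.
have z0 : 0 <= z by rewrite /z invr_ge0 exprn_ge0 //; lra.
have h1 : (z + 1) ^+ n <= expR z ^+ n.
  apply: lerXn2r; rewrite ?nnegrE; [lra| exact: expR_ge0| rewrite addrC; exact: expR_ge1Dx].
rewrite -expRM_natl in h1.
set u := N^-1.
have u0 : 0 < u by rewrite /u invr_gt0; lra.
have N0 : N != 0 by apply/eqP => h; rewrite h in N2; lra.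
have Nu : N * u = 1 by rewrite /u mulfV.
have u2 : u <= 1 / 2.
  have : u * 2 <= u * N by apply: ler_wpM2l; lra.
  rewrite [u * N]mulrC Nu => h; lra.
have zE : n%:R * z = u ^+ 4.
  rewrite -/N /z /u -exprVn; rewrite !exprS expr0; field; exact: N0.
have yE : 1 / N ^+ 3 = u ^+ 3 by rewrite /u exprVn mul1r.
rewrite zE in h1; rewrite yE.
set y := u ^+ 4 in h1 *; set v := u ^+ 3.
have yv : y = u * v by rewrite /y /v exprS.
have v0 : 0 <= v by rewrite /v exprn_ge0 //; lra.
have v1 : v <= 1 / 8.
  rewrite /v; have : u ^+ 3 <= (1 / 2) ^+ 3 by apply: lerXn2r; rewrite ?nnegrE; lra.
  rewrite !exprS expr0; lra.
have y1 : y < 1 by rewrite yv; nra.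
have hE := expR_le_inv y1.
have E0 := expR_ge0 y.
have : expR y - 1 <= v by nra.
lra.
Qed.

Lemma aux1 (R : realType) (a b c d : R) : 0 < d -> d * a = b ^+ 2 * c -> b * c <= d -> 0 <= b -> a <= b.
Proof.
move=> d0 h1 h2 b0.
have : d * a <= d * b by rewrite h1 expr2 -mulrA mulrC; apply: ler_wpM2r => //; lra.
by rewrite ler_pM2l.
Qed.

Lemma aux2 (R : realType) (e : R) : 0 <= e -> e ^+ 2 <= 1 / 4 -> e <= 1 / 2.
Proof. move=> e0 h; rewrite leNgt; apply/negP => h'; nra. Qed.

Theorem lemma2 (R : realType) :
  exists C0 : R, forall C : R, C0 <= C ->
  forall (n : nat) (M : {set {set 'I_n}}) (w : 'I_n -> R) (k : nat) (p : R)
         (T : {set 'I_n}),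
    is_matroid M ->
    (forall i, 0 <= w i) ->
    (forall i j : 'I_n, (i < j)%N -> w j < w i) ->
    (* standing assumptions *)
    (exists m : nat, (0 < m)%N /\ ln (1 / eps C n k%:R) - 2 = m%:R) ->
    160 ^+ 2 * ln (n%:R : R) <= k%:R ->
    (k <= n)%N ->
    eps C n k%:R <= p -> p <= 1 / 2 ->
    is_OPT M k w T ->
    Pr p (fun om => (1 + eps C n (p * k%:R)) * (p * k%:R)
                      <= (phi M (sampleS om :&: T))%:R)
      <= 1 / ((n%:R : R) ^+ 3).
Proof.
exists 7 => C HC n M w k p T HM _ _ [m [m0 Hm]] _ _ Hp1 Hp2 [HT _].
have C0 : 0 < C by lra.
have m1 : 1 <= (m%:R : R) by rewrite (ler_nat R 1 m).
have ek0 : 0 < eps C n k%:R.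
  rewrite ltNge; apply/negP => h.
  have : 1 / eps C n k%:R <= 0 by rewrite div1r invr_le0.
  by move/ln0 => h'; rewrite h' in Hm; lra.
have ek4 : eps C n k%:R <= 1 / 4.
  have pos : 0 < 1 / eps C n k%:R by rewrite div1r invr_gt0.
  have := expR_ge1Dx (ln (1 / eps C n k%:R)); rewrite lnK ?posrE // => h.
  have h1 : eps C n k%:R * (1 / eps C n k%:R) = 1 by rewrite div1r mulfV //; apply: lt0r_neq0.
  have X4 : 4 <= 1 / eps C n k%:R by lra.
  have : eps C n k%:R * 4 <= eps C n k%:R * (1 / eps C n k%:R) by apply: ler_wpM2l => //; lra.
  lra.
move: ek0 ek4; rewrite {1 2}/eps => ek0 ek4.
set L := ln (n%:R : R) in ek0 ek4 *.
set sk := Num.sqrt (L / k%:R) in ek0 ek4.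
have sk0 : 0 < sk by move: ek0; rewrite pmulr_rgt0.
have Lk0 : 0 < L / k%:R by rewrite -sqrtr_gt0.
have k0 : (0 < k)%N.
  rewrite lt0n; apply/negP => /eqP k0'; move: Lk0; by rewrite k0' mulr0n invr0 mulr0 ltxx.
have kR0 : 0 < (k%:R : R) by rewrite ltr0n.
have L0 : 0 < L.
  have -> : L = (L / k%:R) * k%:R by rewrite mulfVK // lt0r_neq0.
  exact: mulr_gt0.
have n2 : (2 <= n)%N.
  rewrite leqNgt; apply/negP => n1.
  have : ln (n%:R : R) <= 0 by apply: ln_le0; rewrite (ler_nat R n 1) -ltnS.
  rewrite -/L; lra.
have HL9 : 1 / 9 <= L := ln_ge19 R n2.
have ek2 : (C * sk) ^+ 2 * k%:R = C ^+ 2 * L.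
  rewrite exprMn sqr_sqrtr ?ltW //; field; exact: lt0r_neq0.
have p0 : 0 < p by apply: lt_le_trans Hp1; rewrite /eps -/L.
set mu := p * k%:R.
have mu0 : 0 < mu by apply: mulr_gt0.
have mu_ge : C * sk * k%:R <= mu.
  by rewrite /mu; apply: ler_wpM2r; [lra | move: Hp1; rewrite /eps -/L].
set e := eps C n mu.
have e0 : 0 <= e by rewrite /e /eps; apply: mulr_ge0; [lra | exact: sqrtr_ge0].
have e2 : mu * e ^+ 2 = C ^+ 2 * L.
  rewrite /e /eps -/L exprMn sqr_sqrtr; last by apply: divr_ge0; lra.
  field; exact: lt0r_neq0.
have e2k : e ^+ 2 <= C * sk.
  apply: (aux1 mu0 _ mu_ge); [by rewrite e2 -ek2| by apply: mulr_ge0; lra].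
have e12 : e <= 1 / 2 by apply: aux2 => //; lra.
set t := (1 + e) * mu.
have t0 : 0 < t by rewrite /t; apply: mulr_gt0; lra.
pose good := fun B : {set 'I_n} => (B != set0) && (#|clT M T B| <= k * #|B|)%N.
pose G := fun (B : {set 'I_n}) (om : {ffun 'I_n -> bool * bool}) =>
   (t - 1) * #|B|%:R <= #|sampleS om :&: clT M T B|%:R.
have p0' : 0 <= p by lra.
apply: le_trans (@union_bound R n p _ _ good G p0' Hp2 _) _.
  move=> om Hom.
  have [q [Hq Hnp]] := phi_witness t0 Hom.
  have [A [HAS HA]] := not_part_witness HM Hnp.
  have [B [HB HBA HBc]] := rk_basis A HM.
  have HAT : A \subset T := subset_trans HAS (subsetIr _ _).
  have [Hcl Hcard Hpos] := clT_props HM HT HAT HB HBA HBc.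
  exists B.
    rewrite /good Hcard andbT -card_gt0; apply: Hpos; exact: leq_ltn_trans (leq0n _) HA.
  rewrite /G.
  have h1 : (#|A| <= #|sampleS om :&: clT M T B|)%N.
    by apply: subset_leq_card; rewrite subsetI Hcl andbT (subset_trans HAS) // subsetIl.
  have h2 : (q * #|B| <= #|A|)%N by rewrite HBc; exact: ltnW.
  apply: le_trans (_ : (t - 1) * #|B|%:R <= (q * #|B|)%:R) _.
    by rewrite natrM; apply: ler_wpM2r.
  by rewrite ler_nat; apply: leq_trans h1.
apply: (le_trans _ (final_bound R n2)).
rewrite big_mkcond [X in _ <= X]big_mkcond /=; apply: ler_sum => B _.
rewrite /good; case: (boolP (B != set0)) => HB0 //=.
case: ifP => HBc; last by apply: exprn_ge0; rewrite invr_ge0 exprn_ge0.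
have x0 : 0 <= e / 4 by lra.
apply: le_trans (@chernoff R n p (e / 4) ((t - 1) * #|B|%:R) (clT M T B) p0' Hp2 x0) _.
have b1 : 1 <= (#|B|%:R : R).
  by rewrite (ler_nat R 1); move: HB0; rewrite -card_gt0.
have Kk : (#|clT M T B|%:R : R) <= k%:R * #|B|%:R by rewrite -natrM ler_nat.
have E1 := expR_ge1 x0.
have e4 : e / 4 < 1 by lra.
have EE := expR_le_inv e4.
have HC2 : 49 <= C ^+ 2.
  have h77 : (7 : R) * 7 <= C * C by apply: ler_pM => //; lra.
  rewrite expr2; apply: le_trans h77; lra.
have k00 : 0 <= (k%:R : R) by exact: ler0n.
have key := key_ineq e2 HC2 HL9 e0 e12 p0' k00 (erefl mu) Kk b1 E1 EE.
have Hz : (((n%:R : R) ^+ 5)^-1) ^+ #|B| = expR (- (#|B|%:R * 5 * L)).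
  rewrite exprVn expRN -mulrA expRM_natl expRM_natl /L lnK // posrE ltr0n.
  by apply: leq_trans n2.
by rewrite Hz ler_expR.
Qed.
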